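(* Let $V:\Omega\to[1,\infty)$ be measurable, $\varphi$ an admissible rate function, and $S$ a stochastic operator on $\mathcal M_V$. Assume: (1) $S$ satisfies the weak Lyapunov condition for $V,\varphi$: there exist $K>0$ and $0<\varsigma<1$ with $$\|S\mu\|_V+\varsigma\|\mu\|_{\varphi(V)}\le\|\mu\|_V+K\|\mu\|\qquad\text{for all }\mu\in\mathcal M_V;$$ (2) for some integer $N\ge1$, $S^N$ satisfies the local coupling condition for the weight $\varphi(V)$: there exist $0<\gamma_H<1$ and $A>K/\varsigma$ such that for every $\nu\in\mathcal N_{\varphi(V)}$ with $\|\nu\|_{\varphi(V)}\le A\|\nu\|$ one has $\|S^N\nu\|\le\gamma_H\|\nu\|$. Set $\beta:=(1-\gamma_H)/(KN)$, $\alpha:=\beta(\varsigma-K/A)>0$ and $|||\mu|||_V:=\|\mu\|+\beta\|\mu\|_V$ for $\mu\in\mathcal M_V$. Then for every $\nu\in\mathcal N_V$ there exists an integer $n$ with $N\le n\le 2N-1$ such that $$|||S^n\nu|||_V+\alpha\sum_{k=0}^{n-1}\|S^k\nu\|_{\varphi(V)}\le|||\nu|||_V .$$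
   Context: Let $(\Omega,\mathcal E)$ be a measurable space. $\mathcal M$ denotes the space of finite signed measures on $\Omega$, $\mathcal P\subset\mathcal M$ the set of probability measures, and $\mathcal N=\{\nu\in\mathcal M:\nu(\Omega)=0\}$. For $\mu\in\mathcal M$ with Hahn–Jordan decomposition $\mu=\mu_+-\mu_-$, $|\mu|=\mu_++\mu_-$ and $\|\mu\|=\int_\Omega d|\mu|$ is the total variation norm. For a measurable $W:\Omega\to[1,\infty)$, $\|\mu\|_W=\int_\Omega W\,d|\mu|$, $\mathcal M_W=\{\mu\in\mathcal M:\|\mu\|_W<\infty\}$, $\mathcal P_W=\mathcal P\cap\mathcal M_W$, $\mathcal N_W=\mathcal N\cap\mathcal M_W$. A stochastic operator is a linear map $S:\mathcal M\to\mathcal M$ with $S(\mathcal P)\subseteq\mathcal P$; it is a stochastic operator on $\mathcal M_W$ if moreover $S(\mathcal M_W)\subseteq\mathcal M_W$ and the restriction is bounded for $\|\cdot\|_W$. An admissible rate function is a concave function $\varphi:[1,\infty)\to[1,\infty)$ with $\varphi(1)=1$ and $\varphi(v)/v\to0$ as $v\to\infty$; $\varphi(V)$ denotes the composition $\varphi\circ V$. *)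

(* Defs.v *)
From HB Require Import structures.
From mathcomp Require Import all_boot all_order all_algebra.
From mathcomp Require Import all_classical all_reals all_analysis.
Set Implicit Arguments. Unset Strict Implicit. Unset Printing Implicit Defensive.
Import Order.TTheory GRing.Theory Num.Theory.
Import numFieldNormedType.Exports.
Local Open Scope classical_set_scope.
Local Open Scope ring_scope.

(* Finite signed measures on (T, measurable) are the charges of
   MathComp-Analysis: {charge set T -> \bar R}. *)

Section SignedMeasures.
Context {R : realType} (d : measure_display) (T : measurableType d).

Definition hahn_sets (mu : {charge set T -> \bar R}) : set T * set T :=
  let P := sval (cid (Hahn_decomposition mu)) in
  let N := sval (cid (svalP (cid (Hahn_decomposition mu)))) in (P, N).

Lemma hahn_setsP (mu : {charge set T -> \bar R}) :
  hahn_decomposition mu (hahn_sets mu).1 (hahn_sets mu).2.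
Proof. exact: (svalP (cid (svalP (cid (Hahn_decomposition mu))))). Qed.

Definition tv (mu : {charge set T -> \bar R}) : {measure set T -> \bar R} :=
  charge_variation (hahn_setsP mu).

Definition tvnorm (mu : {charge set T -> \bar R}) : R := fine (tv mu setT).

Definition wnorm (W : T -> R) (mu : {charge set T -> \bar R}) : \bar R :=
  (\int[tv mu]_x (W x)%:E)%E.

Definition in_MW (W : T -> R) (mu : {charge set T -> \bar R}) : Prop :=
  (wnorm W mu < +oo)%E.

Definition is_prob (mu : {charge set T -> \bar R}) : Prop :=
  (forall A, measurable A -> (0 <= mu A)%E) /\ mu setT = 1%E.

Definition is_null_mass (mu : {charge set T -> \bar R}) : Prop :=
  mu setT = 0%E.

(* linear map M -> M (equality of charges as set functions on measurable sets) *)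
Definition is_linear_op (S : {charge set T -> \bar R} -> {charge set T -> \bar R}) :=
  forall (a : R) (mu nu : {charge set T -> \bar R}) (A : set T), measurable A ->
    S (cadd (cscale a mu) nu) A = (a%:E * S mu A + S nu A)%E.

Definition stochastic_op S := is_linear_op S /\ forall mu, is_prob mu -> is_prob (S mu).

Definition stochastic_op_on (W : T -> R) S :=
  stochastic_op S /\ (forall mu, in_MW W mu -> in_MW W (S mu)) /\
  exists C : R, forall mu, in_MW W mu -> (wnorm W (S mu) <= C%:E * wnorm W mu)%E.

End SignedMeasures.

Definition admissible_rate {R : realType} (phi : R -> R) : Prop :=
  [/\ (forall x y t, 1 <= x -> 1 <= y -> 0 <= t <= 1 ->
         t * phi x + (1 - t) * phi y <= phi (t * x + (1 - t) * y)),
      (forall v, 1 <= v -> 1 <= phi v),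
      phi 1 = 1 &
      (phi v / v) @[v --> +oo] --> 0].

(* Main.v *)
Require Import Defs.
From HB Require Import structures.
From mathcomp Require Import all_boot all_order all_algebra.
From mathcomp Require Import all_classical all_reals all_analysis.
Import Order.TTheory GRing.Theory Num.Theory.
Import numFieldNormedType.Exports.
Local Open Scope classical_set_scope.
Local Open Scope ring_scope.
Set Implicit Arguments. Unset Strict Implicit. 
From Stdlib Require Import ProofIrrelevance.
From mathcomp Require Import lra zify ring.

Lemma charge_ext {R : realType} d (T : measurableType d) (mu nu : {charge set T -> \bar R}) :
  (mu : set T -> \bar R) = nu -> mu = nu.
Proof.
case: mu => f cf; case: nu => g cg /= E; subst g.
congr Charge.Pack.
case: cf => a1 a2 a3; case: cg => b1 b2 b3.
f_equal; [case: a1 b1 => x [y]|case: a2 b2 => x [y]|case: a3 b3 => x [y]]; f_equal; apply: proof_irrelevance.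
Qed.

Lemma final_real {R : realType} (t v f : nat -> R) (K vs c beta alpha : R) (k0 n : nat) :
  0 < K -> 0 <= c -> 0 <= beta -> alpha = beta * (vs - c) ->
  (forall k, 0 <= f k) -> (forall k, t k <= t 0) ->
  v n + vs * (\sum_(0 <= k < n) f k) <= v 0 + K * (\sum_(0 <= k < n) t k) ->
  (forall k, (k < k0)%N -> K * t k < c * f k) ->
  (k0 <= n)%N ->
  t n + beta * ((n - k0)%:R * (K * t 0)) <= t 0 ->
  t n + beta * v n + alpha * (\sum_(0 <= k < n) f k) <= t 0 + beta * v 0.
Proof.
move=> K0 c0 b0 -> f0 tm tel low k0n hyp.
have Hg : \sum_(0 <= k < n) (K * t k - c * f k) <= (n - k0)%:R * (K * t 0).
  rewrite (@big_cat_nat _ _ _ k0) //=.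
  have h1 : \sum_(0 <= k < k0) (K * t k - c * f k) <= \sum_(0 <= k < k0) (0 : R).
    apply: ler_sum_nat => i /andP[_ hi]; have := low i hi; lra.
  have h2 : \sum_(k0 <= k < n) (K * t k - c * f k) <= \sum_(k0 <= k < n) (K * t 0).
    apply: ler_sum_nat => i _; have := f0 i; have := tm i.
    have := mulr_ge0 c0 (f0 i); have := ler_wpM2l (ltW K0) (tm i); lra.
  move: h1 h2; rewrite !sumr_const_nat mul0rn -mulr_natl; lra.
move: Hg; rewrite sumrB -!mulr_sumr => Hg.
set Sf := \sum_(0 <= k < n) f k in tel Hg *.
set St := \sum_(0 <= k < n) t k in tel Hg *.
have := ler_wpM2l b0 tel; have := ler_wpM2l b0 Hg.
rewrite ?mulrDr ?mulrBr ?mulrBl ?mulrDl ?mulrA; nra.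
Qed.

Section S.
Context {R : realType} (d : measure_display) (T : measurableType d).
Local Notation ch := (charge T R).

Lemma finE (mu : ch) A : measurable A -> mu A = (fine (mu A))%:E.
Proof. by move=> mA; rewrite fineK// fin_num_measure. Qed.

Lemma cvE (mu : ch) P N (h : hahn_decomposition mu P N) A : measurable A ->
  charge_variation h A = (mu (A `&` P) - mu (A `&` N))%E.
Proof.
move=> mA; rewrite /charge_variation /=.
rewrite jordan_posE jordan_negE cjordan_posE cjordan_negE.
by rewrite /crestr0 mem_set.
Qed.

Lemma tvnormE (mu : ch) : tvnorm mu = fine (mu (hahn_sets mu).1) - fine (mu (hahn_sets mu).2).
Proof.
rewrite /tvnorm.
have -> : tv mu setT = (mu (setT `&` (hahn_sets mu).1) - mu (setT `&` (hahn_sets mu).2))%E.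
  exact: (cvE (hahn_setsP mu) measurableT).
rewrite !setTI.
have [[mP _] [mN _] _ _] := hahn_setsP mu.
by rewrite (finE _ mP) (finE _ mN) -EFinN -EFinD /=.
Qed.

Lemma caddE (mu nu : ch) X : cadd mu nu X = (mu X + nu X)%E. Proof. by []. Qed.
Lemma cscaleE a (mu : ch) X : cscale a mu X = (a%:E * mu X)%E. Proof. by []. Qed.
Lemma czeroE X : (czero : ch) X = 0%E. Proof. by []. Qed.

Definition p0 (t : T) : ch := charge_of_finite_measure (\d_t : set T -> \bar R).

Lemma p0_prob t : is_prob (p0 t).
Proof. split; first by move=> B mB; rewrite /p0 /= diracE lee_fin. by rewrite /p0 /= diracE mem_set. Qed.

Lemma is_prob_ext (mu nu : ch) : (forall B, measurable B -> mu B = nu B) -> is_prob nu -> is_prob mu.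
Proof. move=> e [h1 h2]; split; first by move=> B mB; rewrite e //; exact: h1. by rewrite e. Qed.

Ltac cunf := repeat (first [rewrite /cadd /= | rewrite /cscale /= | rewrite /czero /=]).


Lemma scale_back (c : R) (x : \bar R) : x \is a fin_num -> (c = 0 -> x = 0%E) ->
  (c%:E * (c^-1%:E * x) = x)%E.
Proof.
move=> fx h; have [c0|c0] := eqVneq c 0.
  rewrite (h c0) c0. have -> : (0%R : \bar R) = 0%:E by []. by rewrite -!EFinM !mul0r.
by rewrite -(fineK fx) -!EFinM mulrA mulfV // mul1r.
Qed.

Lemma decomp (mu : ch) : exists (p q : ch) (a b : R),
  [/\ tvnorm mu = a - b, 0 <= a /\ b <= 0, (a != 0 -> is_prob p), (b != 0 -> is_prob q) &
   forall A, measurable A -> mu A = cadd (cscale a p) (cscale b q) A].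
Proof.
have [[mP posP] [mN negN] PN PN0] := hahn_setsP mu.
have tvE := tvnormE mu.
move: mP posP PN PN0 mN negN tvE; set P := (hahn_sets mu).1; set N := (hahn_sets mu).2.
move=> mP posP PN PN0 mN negN tvE.
set a := fine (mu P); set b := fine (mu N).
have muP : mu P = a%:E := finE _ mP.
have muN : mu N = b%:E := finE _ mN.
have a0 : 0 <= a by rewrite -lee_fin -muP; apply: posP.
have b0 : b <= 0 by rewrite -lee_fin -muN; apply: negN.
exists (cscale a^-1 (crestr0 mu mP)), (cscale b^-1 (crestr0 mu mN)), a, b; split => //.
- move=> an0; split.
    move=> B mB; change (0 <= a^-1%:E * crestr0 mu mP B)%E; rewrite /crestr0 mem_set // /crestr.
    apply: mule_ge0; first by rewrite lee_fin invr_ge0.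
    by apply: posP; [exact: measurableI | exact: subIsetr].
  change (a^-1%:E * crestr0 mu mP setT = 1)%E; rewrite /crestr0 mem_set // /crestr setTI muP.
  by rewrite -EFinM mulVf.
- move=> bn0; split.
    move=> B mB; change (0 <= b^-1%:E * crestr0 mu mN B)%E; rewrite /crestr0 mem_set // /crestr.
    have mBN : measurable (B `&` N) by exact: measurableI.
    rewrite (finE _ mBN) -EFinM lee_fin; apply: mulr_le0; first by rewrite invr_le0.
    by rewrite -lee_fin -(finE _ mBN); apply: negN => //; exact: subIsetr.
  change (b^-1%:E * crestr0 mu mN setT = 1)%E; rewrite /crestr0 mem_set // /crestr setTI muN.
  by rewrite -EFinM mulVf.
- move=> A mA.
  change (mu A = a%:E * (a^-1%:E * crestr0 mu mP A) + b%:E * (b^-1%:E * crestr0 mu mN A))%E.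
  rewrite /crestr0 mem_set // /crestr (charge_partition mu mA mP mN PN PN0).
  have mAP : measurable (A `&` P) by exact: measurableI.
  have mAN : measurable (A `&` N) by exact: measurableI.
  rewrite scale_back ?fin_num_measure //; last first.
    move=> a00; apply/eqP; rewrite eq_le; apply/andP; split; last first.
      by apply: posP => //; exact: subIsetr.
    have := chargeDI mu mP mA; rewrite muP a00 setIC.
    have : (0 <= mu (P `\` A))%E by apply: posP; [exact: measurableD | exact: subDsetl].
    rewrite (finE _ mAP) (finE _ (measurableD mP mA)) -EFinD !lee_fin => h1 [] h2.
    lra.
  rewrite scale_back ?fin_num_measure //.
  move=> b00; apply/eqP; rewrite eq_le; apply/andP; split.
    by apply: negN => //; exact: subIsetr.
  have := chargeDI mu mN mA; rewrite muN b00 setIC.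
  have : (mu (N `\` A) <= 0)%E by apply: negN; [exact: measurableD | exact: subDsetl].
  rewrite (finE _ mAN) (finE _ (measurableD mN mA)) -EFinD !lee_fin => h1 [] h2.
  lra.
Qed.

Section Sop.
Variable S : ch -> ch.
Hypothesis HS : stochastic_op S.

Lemma Slin a (mu nu : ch) A : measurable A ->
  fine (S (cadd (cscale a mu) nu) A) = a * fine (S mu A) + fine (S nu A).
Proof.
move=> mA; rewrite HS.1 // (finE (S mu) mA) (finE (S nu) mA) -EFinM -EFinD //.
Qed.

Lemma Szero A : measurable A -> fine (S czero A) = 0.
Proof.
move=> mA.
have E : (czero : ch) = cadd (cscale 1 czero) czero.
  apply: charge_ext; apply/funext => X; have h : (0 = 1%:E * 0 + 0 :> \bar R)%E by rewrite mule0 adde0. exact: h.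
have := Slin 1 czero czero mA; rewrite -E mul1r => /eqP.
by rewrite -subr_eq subrr eq_sym => /eqP.
Qed.

Lemma Sscale a (mu : ch) A : measurable A -> fine (S (cscale a mu) A) = a * fine (S mu A).
Proof.
move=> mA.
have E : (cscale a mu : ch) = cadd (cscale a mu) czero.
  apply: charge_ext; apply/funext => X; have h : (cscale a mu X = cscale a mu X + 0)%E by rewrite adde0. exact: h.
by rewrite E Slin // Szero // addr0.
Qed.

Lemma Sadd (mu nu : ch) A : measurable A -> fine (S (cadd mu nu) A) = fine (S mu A) + fine (S nu A).
Proof.
move=> mA.
have E : (cadd mu nu : ch) = cadd (cscale 1 mu) nu.
  apply: charge_ext; apply/funext => X; have h : (mu X + nu X = 1%:E * mu X + nu X)%E by rewrite mul1e. exact: h.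
by rewrite E Slin // mul1r.
Qed.

Lemma Sext (mu mu' : ch) : (forall A, measurable A -> mu A = mu' A) ->
  forall A, measurable A -> S mu A = S mu' A.
Proof.
move=> E A mA.
rewrite (finE (S mu) mA) (finE (S mu') mA); congr EFin.
apply/eqP; rewrite -subr_eq0; apply/eqP.
set x := fine (S mu A) - fine (S mu' A).
have Hx : fine (S (cadd mu (cscale (-1) mu')) A) = x by rewrite Sadd // Sscale // mulN1r.
case: (pselect (exists t : T, True)) => [[t0 _]|nT]; last first.
  have A0 : A = set0 by apply/seteqP; split => // y Ay; exfalso; apply: nT; exists y.
  by rewrite /x A0 !charge0 subrr.
apply/eqP/negPn/negP => x0.
set y := fine (S (p0 t0) A).
set t := - ((`|y| + 1) / x).
have prob : is_prob (cadd (cscale t (cadd mu (cscale (-1) mu'))) (p0 t0)).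
  have eq : forall B, measurable B -> cadd (cscale t (cadd mu (cscale (-1) mu'))) (p0 t0) B = p0 t0 B.
    move=> B mB; change ((t%:E * (mu B + (-1)%:E * mu' B)) + p0 t0 B = p0 t0 B)%E.
    by rewrite E // (finE mu' mB) -EFinM -EFinD mulN1r subrr mulr0 add0r.
  by apply: (is_prob_ext eq); apply: p0_prob.
have := (HS.2 _ prob).1 A mA.
rewrite (finE _ mA) lee_fin Slin // Hx -/y.
have -> : t * x = - (`|y| + 1) by rewrite /t mulNr -mulrA mulVf // mulr1.
have := ler_norm y; lra.
Qed.

Lemma prob_part (r : ch) X Y : is_prob r -> measurable X -> measurable Y ->
  X `|` Y = setT -> X `&` Y = set0 ->
  [/\ 0 <= fine (r X), 0 <= fine (r Y) & fine (r X) + fine (r Y) = 1].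
Proof.
move=> [h1 h2] mX mY XY XY0; split; try by apply: fine_ge0; apply: h1.
have := charge_partition r measurableT mX mY XY XY0.
by rewrite h2 !setTI (finE _ mX) (finE _ mY) -EFinD => -[] <-.
Qed.

Lemma Scontract (mu : ch) : tvnorm (S mu) <= tvnorm mu /\ fine (S mu setT) = fine (mu setT).
Proof.
have [p [q [a [b [tvE [a0 b0] pp pq dec]]]]] := decomp mu.
have SE : forall A, measurable A -> fine (S mu A) = a * fine (S p A) + b * fine (S q A).
  by move=> A mA; rewrite (Sext dec mA) Slin // Sscale.
split.
- rewrite tvnormE tvE.
  have [[mP' _] [mN' _] PN' PN0'] := hahn_setsP (S mu).
  rewrite !SE //.
  have ha : a * (fine (S p (hahn_sets (S mu)).1) - fine (S p (hahn_sets (S mu)).2)) <= a.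
    have [->|an0] := eqVneq a 0; first by rewrite mul0r.
    have [h1 h2 h3] := prob_part (HS.2 _ (pp an0)) mP' mN' PN' PN0'.
    nra.
  have hb : b * (fine (S q (hahn_sets (S mu)).1) - fine (S q (hahn_sets (S mu)).2)) <= - b.
    have [->|bn0] := eqVneq b 0; first by rewrite mul0r oppr0.
    have [h1 h2 h3] := prob_part (HS.2 _ (pq bn0)) mP' mN' PN' PN0'.
    nra.
  lra.
- rewrite SE // dec // (_ : cadd (cscale a p) (cscale b q) setT = (a%:E * p setT + b%:E * q setT)%E) //.
  rewrite (finE p measurableT) (finE q measurableT) -!EFinM -EFinD /=.
  congr (_ + _).
    have [->|an0] := eqVneq a 0; first by rewrite !mul0r.
    by have [_ ->] := HS.2 _ (pp an0); have [_ ->] := pp an0.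
  have [->|bn0] := eqVneq b 0; first by rewrite !mul0r.
  by have [_ ->] := HS.2 _ (pq bn0); have [_ ->] := pq bn0.
Qed.

End Sop.
End S.

Unset Implicit Arguments.

Theorem lemma4p3 (R : realType) (d : measure_display) (T : measurableType d)
  (V : T -> R) (phi : R -> R)
  (S : {charge set T -> \bar R} -> {charge set T -> \bar R})
  (K varsigma : R) (N : nat) (gammaH A : R) :
  measurable_fun setT V -> (forall x, 1 <= V x) ->
  admissible_rate phi ->
  stochastic_op_on V S ->
  0 < K -> 0 < varsigma < 1 ->
  (forall mu, in_MW V mu ->
     (wnorm V (S mu) + varsigma%:E * wnorm (phi \o V) mu
      <= wnorm V mu + (K * tvnorm mu)%:E)%E) ->
  (1 <= N)%N -> 0 < gammaH < 1 -> K / varsigma < A ->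
  (forall nu, is_null_mass nu -> in_MW (phi \o V) nu ->
     (wnorm (phi \o V) nu <= (A * tvnorm nu)%:E)%E ->
     tvnorm (iter N S nu) <= gammaH * tvnorm nu) ->
  let beta := (1 - gammaH) / (K * N%:R) in
  let alpha := beta * (varsigma - K / A) in
  let tnorm := fun mu => ((tvnorm mu)%:E + beta%:E * wnorm V mu)%E in
  forall nu, is_null_mass nu -> in_MW V nu ->
  exists n : nat, (N <= n <= 2 * N - 1)%N /\
    (tnorm (iter n S nu) + alpha%:E * \sum_(0 <= k < n) wnorm (phi \o V) (iter k S nu)
     <= tnorm nu)%E.
Proof.
move=> mV V1 adm [HS [HMV _]] K0 /andP[vs0 vs1] Lyap N1 /andP[g0 g1] KA coup beta alpha tnorm
  nu nu0 nuV.
have phi1 : forall x, 1 <= phi (V x) by move=> x; case: adm => _ h _ _; apply: h.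
have A0 : 0 < A.
  apply: lt_trans KA; exact: divr_gt0.
have inV : forall k, in_MW V (iter k S nu) by elim=> //= k IH; apply: HMV.
have null : forall k, is_null_mass (iter k S nu).
  elim => //= k IH.
  rewrite /is_null_mass (finE _ measurableT) (Scontract HS _).2.
  by move: IH; rewrite /is_null_mass => ->.
have tvm : forall k, tvnorm (iter k S nu) <= tvnorm nu.
  by elim=> //= k IH; exact: le_trans (Scontract HS _).1 IH.
have wge0 : forall (W : T -> R) mu, (forall x, 0 <= W x) -> (0 <= wnorm W mu)%E.
  by move=> W mu hW; apply: integral_ge0 => x _; rewrite lee_fin.
have V0 : forall x, 0 <= V x by move=> x; apply: le_trans (V1 x).
have P0 : forall x, 0 <= (phi \o V) x by move=> x; apply: le_trans (phi1 x).
have wVfin : forall k, wnorm V (iter k S nu) = (fine (wnorm V (iter k S nu)))%:E.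
  by move=> k; rewrite fineK // ge0_fin_numE //; [exact: inV | exact: wge0].
have wphifin : forall k, wnorm (phi \o V) (iter k S nu) = (fine (wnorm (phi \o V) (iter k S nu)))%:E.
  move=> k; have L := Lyap _ (inV k).
  rewrite -[S (iter k S nu)]/(iter k.+1 S nu) (wVfin k.+1) (wVfin k) in L.
  have h0 := wge0 _ (iter k S nu) P0.
  move: L h0; case: (wnorm (phi \o V) (iter k S nu)) => [r| |] //= L _.
  by move: L; rewrite gt0_muley ?lte_fin // addey.
pose t k := tvnorm (iter k S nu).
pose v k := fine (wnorm V (iter k S nu)).
pose f k := fine (wnorm (phi \o V) (iter k S nu)).
have f0 : forall k, 0 <= f k by move=> k; apply: fine_ge0; exact: wge0.
have Lr : forall k, v k.+1 + varsigma * f k <= v k + K * t k.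
  move=> k; have L := Lyap _ (inV k).
  rewrite -[S (iter k S nu)]/(iter k.+1 S nu) (wVfin k.+1) (wVfin k) (wphifin k) in L.
  by move: L; rewrite -!EFinM -!EFinD lee_fin.
have tel : forall n, v n + varsigma * (\sum_(0 <= k < n) f k) <= v 0 + K * (\sum_(0 <= k < n) t k).
  elim => [|n IH]; first by rewrite !big_geq // !mulr0 !addr0.
  rewrite !big_nat_recr //= !mulrDr; have := Lr n; lra.
have key : forall k0 n, (forall k, (k < k0)%N -> A * t k < f k) -> (k0 <= n)%N ->
    t n + beta * ((n - k0)%:R * (K * t 0)) <= t 0 ->
    (tnorm (iter n S nu) + alpha%:E * \sum_(0 <= k < n) wnorm (phi \o V) (iter k S nu)
     <= tnorm nu)%E.
  move=> k0 n low k0n hyp.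
  rewrite -[tnorm nu]/(tnorm (iter 0 S nu)).
  rewrite (eq_bigr (fun k => (f k)%:E)); last by move=> k _; exact: wphifin.
  rewrite sumEFin /tnorm (wVfin n) (wVfin 0) -!EFinM -!EFinD lee_fin.
  apply: (final_real (t := t) (v := v) (f := f) (K := K) (vs := varsigma) (beta := beta) (alpha := alpha) (c := K / A) (k0 := k0)) => //.
  - by apply: divr_ge0; apply: ltW.
  - apply: divr_ge0; first by rewrite subr_ge0 ltW.
    by apply: mulr_ge0; [exact: ltW | exact: ler0n].
  - move=> k hk; have := low k hk => h.
    have -> : K * t k = K / A * (A * t k) by rewrite mulrA divfK // gt_eqF.
    by rewrite ltr_pM2l // divr_gt0.
have tge0 : forall k, 0 <= t k.
  move=> k; rewrite /t /tvnorm; apply: fine_ge0; exact: measure_ge0.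
have [ex|nex] := pselect (exists k, (k < N)%N && (f k <= A * t k)).
- case: (ex_minnP ex) => k0 /andP[hk0 hf] hmin.
  exists (k0 + N)%N; split; first by apply/andP; split; lia.
  apply: (key k0) => //.
  + move=> k hk; rewrite ltNge; apply/negP => hle.
    have : (k0 <= k)%N by apply: hmin; rewrite hle andbT; lia.
    lia.
  + lia.
  + rewrite addKn.
    have hc : t (k0 + N)%N <= gammaH * t k0.
      rewrite /t addnC iterD; apply: coup; first exact: null.
        by rewrite /in_MW wphifin ltry.
      by rewrite wphifin lee_fin.
    have hb : beta * (N%:R * (K * t 0)) = (1 - gammaH) * t 0.
      rewrite /beta; field.
      by apply/andP; split; [rewrite pnatr_eq0; lia | rewrite gt_eqF].
    rewrite hb; have := tvm k0; have := tge0 k0; have := tge0 0%N.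
    rewrite -/(t k0) -/(t 0%N); nra.
- exists N; split; first by apply/andP; split; lia.
  apply: (key N) => //.
  + move=> k hk; rewrite ltNge; apply/negP => hle; apply: nex; exists k.
    by rewrite hk hle.
  + by rewrite subnn mul0r mulr0 addr0; exact: tvm.
Qed.
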